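(* For all integers $n,k\ge 0$ and every real (or complex) $x\neq 1$, \[ \sum_{d=0}^k d^n x^d = \sum_{i=0}^n \frac{e_{n,i}\, x^i - e_{n,i}^k\, x^{k+i+1}}{(1-x)^{n+1}}. \]
   Context: Convention: $0^0=1$. The Eulerian numbers $e_{n,i}$ are defined by $e_{0,0}=1$, $e_{n,i}=0$ whenever $i\le 0$ (unless $n=i=0$) or $i>n$, and $e_{n,i}=i\,e_{n-1,i}+(n-i+1)\,e_{n-1,i-1}$ for all other integers $n,i$. For a fixed integer parameter $k$, the numbers $e^k_{n,i}$ are defined by $e^k_{0,0}=1$, $e^k_{n,i}=0$ whenever $i<0$ or $i>n$, and $e^k_{n,i}=(k+i+1)\,e^k_{n-1,i}+(n-k-i)\,e^k_{n-1,i-1}$ for all other integers $n,i$. *)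

(* Defs.v *)
From mathcomp Require Import all_boot all_order all_algebra.
Set Implicit Arguments. Unset Strict Implicit. Unset Printing Implicit Defensive.
Import Order.TTheory GRing.Theory Num.Theory.
Local Open Scope ring_scope.

Fixpoint eulerian (n i : nat) {struct n} : int :=
  match n with
  | 0%N => if i is 0%N then 1 else 0
  | m.+1 =>
      match i with
      | 0%N => 0
      | j.+1 => if (m.+1 < j.+1)%N then 0
                else (j.+1)%:Z * eulerian m j.+1
                     + ((m.+1)%:Z - (j.+1)%:Z + 1) * eulerian m j
      end
  end.

Fixpoint eulerianK (k n i : nat) {struct n} : int :=
  match n with
  | 0%N => if i is 0%N then 1 else 0
  | m.+1 =>
      if (m.+1 < i)%N then 0 else
      match i with
      | 0%N => (k%:Z + 1) * eulerianK k m 0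
      | j.+1 => (k%:Z + (j.+1)%:Z + 1) * eulerianK k m j.+1
                + ((m.+1)%:Z - k%:Z - (j.+1)%:Z) * eulerianK k m j
      end
  end.

Example e_3 : [seq eulerian 3 i | i <- iota 0 5] = [:: 0; 1; 4; 1; 0].
Proof. by []. Qed.
Example ek_1 : [seq eulerianK 2 1 i | i <- iota 0 3] = [:: 3; -2; 0].
Proof. by []. Qed.

(* Main.v *)
Require Import Defs.
From mathcomp Require Import all_boot all_order all_algebra.
From mathcomp Require Import ring.
Import Order.TTheory GRing.Theory Num.Theory.
Local Open Scope ring_scope.

Lemma eul_gt n i : (n < i)%N -> eulerian n i = 0.
Proof.
case: n => [|m]; case: i => [|j] //= h.
by rewrite h.
Qed.

Lemma eulK_gt k n i : (n < i)%N -> eulerianK k n i = 0.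
Proof.
case: n => [|m]; case: i => [|j] //= h.
by rewrite h.
Qed.

Lemma eulS n j : eulerian n.+1 j.+1 =
  (j.+1)%:Z * eulerian n j.+1 + ((n.+1)%:Z - (j.+1)%:Z + 1) * eulerian n j.
Proof.
rewrite /=; case: ifP => // h.
by rewrite !eul_gt ?mulr0 ?addr0 //; rewrite ltnS in h => //; apply: ltnW.
Qed.

Lemma eulKS k n j : eulerianK k n.+1 j.+1 =
  (k%:Z + (j.+1)%:Z + 1) * eulerianK k n j.+1
  + ((n.+1)%:Z - k%:Z - (j.+1)%:Z) * eulerianK k n j.
Proof.
rewrite /=; case: ifP => // h.
by rewrite !eulK_gt ?mulr0 ?addr0 //; rewrite ltnS in h => //; apply: ltnW.
Qed.

Lemma eulK0 k n : eulerianK k n.+1 0 = (k%:Z + 1) * eulerianK k n 0.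
Proof. by []. Qed.

Section P.
Variable R : numFieldType.
Variable k : nat.

Definition E n : {poly R} := \poly_(i < n.+1) (eulerian n i)%:~R.
Definition F n : {poly R} := \poly_(i < n.+1) (eulerianK k n i)%:~R.
Definition S n : {poly R} := \sum_(d < k.+1) ((d%:R : R) ^+ n) *: 'X^d.

Lemma coefE n i : (E n)`_i = (eulerian n i)%:~R.
Proof. by rewrite coef_poly; case: ltnP => // h; rewrite eul_gt. Qed.

Lemma coefF n i : (F n)`_i = (eulerianK k n i)%:~R.
Proof. by rewrite coef_poly; case: ltnP => // h; rewrite eulK_gt. Qed.

Lemma E_rec n : E n.+1 =
  'X * ((E n)^`() - 'X * (E n)^`()) + ('X * E n) *+ n.+1.
Proof.
apply/polyP => i; rewrite coefE coefD coefMn !coefXM.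
case: i => [|j]; first by rewrite /= mul0rn addr0.
rewrite eulS /= coefB coefXM coef_deriv coefE.
case: j => [|j].
  rewrite /= subr0 !coefE; rewrite ?(intrD, intrM, intrN); ring.
rewrite /= coef_deriv coefE; rewrite ?(intrD, intrM, intrN); ring.
Qed.

Lemma F_rec n : F n.+1 =
  (F n - 'X * F n) *+ k.+1 + ('X * (F n)^`() - 'X * ('X * (F n)^`()))
  + ('X * F n) *+ n.+1.
Proof.
apply/polyP => i; rewrite coefF ?(coefD, coefMn, coefB, coefN, coefXM).
case: i => [|j].
  rewrite eulK0 /= ?(coefXM, coef_deriv, coefF, coefN); rewrite ?(intrD, intrM, intrN); ring.
rewrite eulKS.
case: j => [|j].
  rewrite /= ?(coefXM, coef_deriv, coefF, coefN) /=; rewrite ?(intrD, intrM, intrN); ring.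
rewrite /= ?(coefXM, coef_deriv, coefF, coefN) /=; rewrite ?(intrD, intrM, intrN); ring.
Qed.

Lemma S_rec n : S n.+1 = 'X * (S n)^`().
Proof.
rewrite /S raddf_sum big_distrr /=; apply: eq_bigr => d _.
rewrite derivZ derivXn -scalerAr mulrnAr.
case: d => [[|d] hd] /=; first by rewrite mulr0n scaler0 expr0n /= scale0r.
by rewrite -exprS -scaler_nat scalerA exprS mulrC.
Qed.

Lemma geo m : (1 - 'X : {poly R}) * \sum_(d < m.+1) 'X^d = 1 - 'X^(m.+1).
Proof.
elim: m => [|m IH]; first by rewrite big_ord1 expr0 mulr1 expr1.
rewrite big_ord_recr /= mulrDr IH (exprS _ m.+1); ring.
Qed.

Lemma key n : (1 - 'X) ^+ n.+1 * S n = E n - 'X^(k.+1) * F n.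
Proof.
elim: n => [|n IH].
  have -> : E 0 = 1.
    by apply/polyP => i; rewrite coefE coef1; case: i.
  have -> : F 0 = 1.
    by apply/polyP => i; rewrite coefF coef1; case: i.
  rewrite /S expr1 mulr1 -geo; congr (_ * _); apply: eq_bigr => d _.
  by rewrite expr0 scale1r.
have hd := congr1 deriv IH.
rewrite !derivE deriv_exp !derivE /= in hd.
rewrite E_rec F_rec S_rec.
apply/eqP; rewrite -subr_eq0; apply/eqP.
lazymatch goal with |- ?G = 0 =>
 lazymatch type of hd with ?a = ?b =>
 lazymatch type of IH with ?c = ?d =>
 have -> : G = 'X * (1 - 'X) * (a - b) + ('X *+ n.+1) * (c - d)
   by rewrite !exprS; ring end end end.
by rewrite hd IH !subrr !mulr0 addr0.
Qed.
End P.

Theorem proposition2p1 (R : numFieldType) (n k : nat) (x : R) (hx : x != 1) :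
  \sum_(0 <= d < k.+1) (d%:R) ^+ n * x ^+ d
  = \sum_(0 <= i < n.+1)
      ((eulerian n i)%:~R * x ^+ i - (eulerianK k n i)%:~R * x ^+ (k + i + 1))
        / (1 - x) ^+ n.+1.
Proof.
have h := congr1 (fun p => p.[x]) (key R k n).
rewrite /= hornerM hornerD hornerN hornerM hornerXn !horner_exp hornerD hornerN
  hornerX hornerC /E /F !horner_poly /S horner_sum in h.
have hz : (1 - x) ^+ n.+1 != 0 by rewrite expf_neq0 // subr_eq0 eq_sym.
rewrite -mulr_suml sumrB !big_mkord.
apply: (mulfI hz); rewrite [RHS]mulrC divfK //.
transitivity ((1 - x) ^+ n.+1 * \sum_(i < k.+1) ((i%:R ^+ n) *: ('X^i : {poly R})).[x]).
  by congr (_ * _); apply: eq_bigr => d _; rewrite hornerZ hornerXn.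
rewrite h; congr (_ - _); rewrite big_distrr /=; apply: eq_bigr => i _.
by rewrite addnAC addn1 exprD mulrCA.
Qed.
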